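(* Let $\varepsilon>0$. Every graph $G$ on $n$ vertices has treewidth $\mathrm{tw}(G)\le 2\,b_{\varepsilon}(G)+2\varepsilon n$.
   Context: A tree decomposition of a graph $G=(V,E)$ is a pair $(\{X_i:i\in I\},T=(I,F))$ where each $X_i\subseteq V$ and $T$ is a tree, such that (a) $\bigcup_{i\in I}X_i=V$; (b) for every edge $\{v,w\}\in E$ there is $i\in I$ with $\{v,w\}\subseteq X_i$; (c) whenever $j$ lies on the path from $i$ to $k$ in $T$, $X_i\cap X_k\subseteq X_j$. Its width is $\max_{i\in I}|X_i|-1$, and the treewidth $\mathrm{tw}(G)$ is the minimum width of a tree decomposition of $G$. For a graph $G'=(V',E')$ and $U\subseteq V'$, $N(U)$ denotes the set of vertices of $V'\setminus U$ adjacent (in $G'$) to some vertex of $U$. $G'$ is an $\varepsilon$-expander if every $U\subseteq V'$ with $|U|\le |V'|/2$ satisfies $|N(U)|\ge\varepsilon|U|$. A graph $G$ is $(b,\varepsilon)$-bounded if no subgraph $G'\subseteq G$ with at least $b$ vertices is an $\varepsilon$-expander. The $\varepsilon$-boundedness $b_\varepsilon(G)$ is the minimum $b$ for which $G$ is $(b+1,\varepsilon)$-bounded. *)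

(* Defs.v *)
From HB Require Import structures.
From mathcomp Require Import all_boot all_order all_algebra.
Set Implicit Arguments. Unset Strict Implicit. Unset Printing Implicit Defensive.
Import Order.TTheory GRing.Theory Num.Theory.

(* A (simple) graph G = (V, e) : V a finType, e a symmetric irreflexive rel. *)

Definition is_tree (I : finType) (t : rel I) : Prop :=
  [/\ symmetric t, irreflexive t, #|I| > 0,
      (forall i k : I, connect t i k) &
      ~ (exists (x : I) (p : seq I),
           [/\ path t x p, uniq (x :: p), 2 <= size p & t (last x p) x])].

(* j lies on the path from i to k in the tree t: every t-walk from i to k
   visits j (in a tree this is exactly the unique i-k path). *)
Definition on_tree_path (I : finType) (t : rel I) (i j k : I) : Prop :=
  forall p : seq I, path t i p -> last i p = k -> j \in i :: p.

Definition tree_decomposition (V : finType) (e : rel V)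
    (I : finType) (t : rel I) (X : I -> {set V}) : Prop :=
  [/\ is_tree t,
      (forall v : V, exists i : I, v \in X i),
      (forall v w : V, e v w -> exists i : I, (v \in X i) && (w \in X i)) &
      (forall i j k : I, on_tree_path t i j k -> X i :&: X k \subset X j)].

Definition td_width (V : finType) (I : finType) (X : I -> {set V}) : int :=
  ((\max_(i : I) #|X i|)%N)%:Z - 1.

Definition is_treewidth (V : finType) (e : rel V) (k : int) : Prop :=
  (exists (I : finType) (t : rel I) (X : I -> {set V}),
      tree_decomposition e t X /\ td_width X = k) /\
  (forall (I : finType) (t : rel I) (X : I -> {set V}),
      tree_decomposition e t X -> (k <= td_width X)%R).

(* A subgraph G' = (V', E') of G = (V, e): E' is a set of (ordered) pairs,
   each an edge of G with both endpoints in V'. Adjacency in G' is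
   symmetric closure of E'. *)
Definition is_subgraph (V : finType) (e : rel V) (V' : {set V}) (E' : {set V * V}) : bool :=
  [forall p in E', [&& e p.1 p.2, p.1 \in V' & p.2 \in V']].

Definition sub_adj (V : finType) (E' : {set V * V}) (u v : V) : bool :=
  ((u, v) \in E') || ((v, u) \in E').

Definition nbhd (V : finType) (V' : {set V}) (E' : {set V * V}) (U : {set V}) : {set V} :=
  [set v in V' :\: U | [exists u in U, sub_adj E' u v]].

Definition is_expander (R : realFieldType) (V : finType)
    (V' : {set V}) (E' : {set V * V}) (eps : R) : bool :=
  [forall U : {set V}, (U \subset V') && (2 * #|U| <= #|V'|)%N ==>
     (eps * (#|U|%:R) <= (#|nbhd V' E' U|)%:R)%R].

Definition bounded (R : realFieldType) (V : finType) (e : rel V) (b : nat) (eps : R) : bool :=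
  [forall V' : {set V}, forall E' : {set V * V},
     (is_subgraph e V' E' && (b <= #|V'|)%N) ==> ~~ is_expander V' E' eps].

Lemma bounded_exists (R : realFieldType) (V : finType) (e : rel V) (eps : R) :
  exists b, bounded e b.+1 eps.
Proof.
exists #|V|; apply/forallP => V'; apply/forallP => E'; apply/implyP.
by case/andP=> _; rewrite ltnNge max_card.
Qed.

Definition b_eps (R : realFieldType) (V : finType) (e : rel V) (eps : R) : nat :=
  ex_minn (bounded_exists e eps).

(* Main.v *)
Require Import Defs.
From mathcomp Require Import all_boot all_order all_algebra.
From mathcomp Require Import zify.
Import Order.TTheory GRing.Theory Num.Theory.


Definition prel (m : nat) : rel 'I_m := fun i j => (i.+1 == j :> nat) || (j.+1 == i :> nat).

Lemma prel_sym m : symmetric (@prel m).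
Proof. by move=> i j; rewrite /prel orbC. Qed.

Lemma up_walk m d : forall i : 'I_m.+1, i + d < m.+1 ->
  [/\ path (@prel m.+1) i (map inord (iota i.+1 d)),
      last i (map inord (iota i.+1 d)) = inord (i + d) &
      forall j : 'I_m.+1, j \in i :: map inord (iota i.+1 d) -> i <= j <= i + d].
Proof.
elim: d => [|d IH] i lt.
  split => //=; first by rewrite addn0 inord_val.
  by move=> j; rewrite inE => /eqP->; rewrite addn0 leqnn.
have lt1 : i.+1 < m.+1 by lia.
have := IH (inord i.+1); rewrite inordK // => /(_ ltac:(lia)) [P L M].
split.
- rewrite /= P andbT /prel inordK //; by rewrite eqxx.
- by rewrite /= L addSnnS.
- move=> j; rewrite inE => /orP[/eqP->|/M]; lia.
Qed.


Lemma otp_sym (I : finType) (t : rel I) (ts : symmetric t) i j k :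
  on_tree_path t i j k -> on_tree_path t k j i.
Proof.
move=> H p pp lp.
have P : path t i (rev (belast k p)).
  rewrite -lp rev_path; rewrite (@eq_path _ _ t) //; by move=> a b; rewrite ts.
have L : last i (rev (belast k p)) = k.
  case: p {pp P} lp => [/= ->//|a p _]; by rewrite /= rev_cons last_rcons.
have := H _ P L; rewrite inE => /orP[/eqP->|]; first by rewrite -lp mem_last.
by rewrite mem_rev => /mem_belast.
Qed.

Lemma otp_between m (i j k : 'I_m.+1) : on_tree_path (@prel m.+1) i j k ->
  minn i k <= j <= maxn i k.
Proof.
wlog ik : i k / i <= k.
  move=> W; case/orP: (leq_total i k) => ik; first exact: W.
  move/(@otp_sym _ _ (@prel_sym m.+1)) => H; rewrite minnC maxnC; apply: (W _ _ _ H); lia.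
move=> H; have ko := ltn_ord k; have io := ltn_ord i; have [P L M] := @up_walk m (k - i) i ltac:(lia).
have : j \in i :: map inord (iota i.+1 (k - i)).
  apply: H => //; rewrite L; apply: val_inj; rewrite /= inordK; lia.
move/M; lia.
Qed.


Lemma prel_tree m : is_tree (@prel m.+1).
Proof.
split.
- exact: prel_sym.
- by move=> i; rewrite /prel; apply/norP; split; apply/eqP; lia.
- by rewrite card_ord.
- have H : forall i k : 'I_m.+1, i <= k -> connect (@prel m.+1) i k.
    move=> i k ik; have ko := ltn_ord k.
    have [P L _] := @up_walk m (k - i) i ltac:(lia).
    apply/connectP; exists (map inord (iota i.+1 (k - i))) => //.
    rewrite L; apply: val_inj; rewrite /= inordK; lia.
  move=> i k; case/orP: (leq_total i k) => ik; first exact: H.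
  rewrite (sym_connect_sym (@prel_sym m.+1)); exact: H.
- case=> x [p [pp up sp lp]].
  have cyc : cycle (@prel m.+1) (x :: p) by rewrite /= rcons_path pp lp.
  have [y yin ymax] : exists2 y, y \in x :: p & forall z, z \in x :: p -> (z : nat) <= y.
    case: (@arg_maxnP _ x (fun y => y \in x :: p) (fun z => nat_of_ord z) (mem_head _ _)).
    by move=> y yin H; exists y.
  case: (rot_to yin) => n q eq.
  have cyc' : cycle (@prel m.+1) (y :: q) by rewrite -eq rot_cycle.
  have uq : uniq (y :: q) by rewrite -eq rot_uniq.
  have sq : size q = size p by have := congr1 size eq; rewrite size_rot /= => [[]].
  have mq : forall z, z \in q -> z \in x :: p.
    by move=> z zq; rewrite -(mem_rot n) eq inE zq orbT.
  clear eq; case: q cyc' uq sq mq => [|a [|b r]] /=; try (by move=> _ _ sq' _; move: sp; rewrite -sq').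
  move=> /and3P[ya _]; rewrite rcons_path => /andP[_ ly].
  move=> /and4P[_ an _ _] _ mq.
  have la : a = last b r.
    apply: ord_inj; move: ya ly; rewrite /prel.
    have := ymax a (mq a (mem_head _ _)).
    have := ymax (last b r) (mq _ _); rewrite inE mem_last orbT => /(_ isT).
    move: (nat_of_ord a) (nat_of_ord (last b r)) (nat_of_ord y) => a' l' y'.
    move=> h1 h2 /orP[/eqP h3|/eqP h3] /orP[/eqP h4|/eqP h4]; lia.
  by move: an; rewrite la mem_last.
Qed.


Definition interp {V : finType} (s : seq {set V}) := forall i j k, i <= j -> j <= k -> k < size s ->
  nth set0 s i :&: nth set0 s k \subset nth set0 s j.

Lemma interp_map (V : finType) (N : {set V}) s : interp s -> interp (map (setU N) s).
Proof.
move=> H i j k ij jk; rewrite size_map => ks.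
rewrite !(nth_map set0 set0); try lia.
by rewrite -setUIr setUS // H.
Qed.

Lemma interp_cat (V : finType) (s1 s2 : seq {set V}) : interp s1 -> interp s2 ->
  (forall i k j, i < size s1 -> k < size s2 -> j < size s1 + size s2 ->
     nth set0 s1 i :&: nth set0 s2 k \subset nth set0 (s1 ++ s2) j) -> interp (s1 ++ s2).
Proof.
move=> h1 h2 h3 i j k ij jk; rewrite size_cat => ks.
case: (ltnP k (size s1)) => k1.
  have i1 : i < size s1 by lia.
  have j1 : j < size s1 by lia.
  rewrite !nth_cat i1 j1 k1; exact: h1.
case: (ltnP i (size s1)) => i1.
  rewrite [nth _ _ i]nth_cat [nth _ _ k]nth_cat i1 ltnNge k1 /=.
  apply: h3 => //; lia.
rewrite !nth_cat ltnNge i1 ltnNge k1 ltnNge (_ : size s1 <= j) /=; last lia.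
apply: h2; lia.
Qed.

Local Open Scope ring_scope.


Definition goodseq (R : realFieldType) (V : finType) (e : rel V) (eps : R) (b : nat)
  (A : {set V}) (s : seq {set V}) :=
 [/\ (0 < size s)%N, all (fun X : {set V} => X \subset A) s,
     forall v w, v \in A -> w \in A -> (v == w) || e v w -> has (fun X : {set V} => (v \in X) && (w \in X)) s,
     interp s &
     all (fun X : {set V} => (#|X|%:R <= b%:R + eps * #|A|%:R :> R)) s].

Arguments goodseq {R V}.

Lemma epsmono (R : realFieldType) (eps : R) (x y z : nat) : 0 < eps -> (x + y <= z)%N ->
  eps * x%:R + eps * y%:R <= eps * z%:R.
Proof. by move=> ep h; rewrite -mulrDr -natrD ler_pM2l // ler_nat. Qed.

Arguments epsmono {R eps x y z}.

Lemma base_case (R : realFieldType) (V : finType) (e : rel V) (eps : R) (b : nat)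
  (epos : 0 < eps) (A : {set V}) : (#|A| <= b)%N -> goodseq e eps b A [:: A].
Proof.
move=> hAb; rewrite /goodseq; split => //=.
+ by rewrite subxx.
+ by move=> v w vA wA _; rewrite vA wA.
+ move=> i j k ij jk; rewrite /= ltnS leqn0 => /eqP k0; subst k.
  have -> : i = 0%N by lia. have -> : j = 0%N by lia. by rewrite /= setIid.
+ rewrite andbT -[X in X <= _]addr0 lerD ?ler_nat //.
  by apply: mulr_ge0; [exact: ltW | exact: ler0n].
Qed.

Lemma decomp (R : realFieldType) (V : finType) (e : rel V) (eps : R) (b : nat)
  (epos : 0 < eps) (hb : bounded e b.+1 eps) n :
  forall A : {set V}, (#|A| <= n)%N -> exists s, goodseq e eps b A s.
Proof.
elim: n => [|n IH] A hA; case: (leqP #|A| b) => hAb.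
- by exists [:: A]; apply: base_case.
- lia.
- by exists [:: A]; apply: base_case.
pose E' := [set p : V * V | [&& e p.1 p.2, p.1 \in A & p.2 \in A]].
have sg : is_subgraph e A E'.
  by apply/forallP => p; apply/implyP; rewrite inE.
have := forallP (forallP hb A) E'; rewrite sg hAb /= => /forallPn [U].
rewrite negb_imply => /andP[/andP[UA hU]]; rewrite -ltNge => hN.
set N := nbhd A E' U in hN.
pose A2 := A :\: (U :|: N).
have U0 : (0 < #|U|)%N.
  case: (posnP #|U|) => // h; move: hN; rewrite h mulr0 ltNge ler0n //.
have NA : N \subset A.
  by apply/subsetP => v; rewrite inE => /andP[]; rewrite inE => /andP[].
have A2A : A2 \subset A by apply: subsetDl.
have UA2 : forall v, v \in U -> v \in A2 -> False.
  by move=> v vU; rewrite inE inE vU.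
have cUA2 : (#|U| + #|A2| <= #|A|)%N.
  have -> : (#|U| + #|A2| = #|U :|: A2|)%N.
    rewrite cardsU (_ : U :&: A2 = set0) ?cards0 ?subn0 //.
    apply/setP => v; rewrite inE [v \in set0]inE; apply/negbTE/andP => -[vU vA2].
    exact: (UA2 v vU vA2).
  by apply: subset_leq_card; rewrite subUset UA A2A.
have hU1 : (#|U| <= n)%N by move: hU hA U0; clear; lia.
have hA21 : (#|A2| <= n)%N by move: cUA2 hA U0; clear; lia.
have [s1 [s1p s1A s1e s1i s1s]] := IH U hU1.
have [s2 [s2p s2A s2e s2i s2s]] := IH A2 hA21.
exists (map (setU N) s1 ++ map (setU N) s2); rewrite /goodseq; split.
- by rewrite size_cat size_map addn_gt0 s1p.
- rewrite all_cat !all_map; apply/andP; split; apply/allP => X XS /=; rewrite subUset NA /=.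
    by apply: subset_trans UA; apply: (allP s1A).
  by apply: subset_trans A2A; apply: (allP s2A).
- have L1 : forall s (v w : V), has (fun X : {set V} => (v \in X) && (w \in X)) s ->
      has (fun X : {set V} => (v \in X) && (w \in X)) (map (setU N) s).
    move=> s v w; rewrite has_map; apply: sub_has => X /andP[a c] /=.
    by rewrite !in_setU a c !orbT.
  have L2 : forall s (v w : V), v \in N -> has (fun X : {set V} => (w \in X) && (w \in X)) s ->
      has (fun X : {set V} => (v \in X) && (w \in X)) (map (setU N) s).
    move=> s v w vN; rewrite has_map; apply: sub_has => X /andP[a _] /=.
    by rewrite !in_setU a vN !orbT.
  have L3 : forall s (v w : V), w \in N -> has (fun X : {set V} => (v \in X) && (v \in X)) s ->
      has (fun X : {set V} => (v \in X) && (w \in X)) (map (setU N) s).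
    move=> s v w wN; rewrite has_map; apply: sub_has => X /andP[a _] /=.
    by rewrite !in_setU a wN !orbT.
  have cases : forall v, v \in A -> [\/ v \in N, v \in U | v \in A2].
    move=> v vA; case vN: (v \in N); first by constructor 1.
    case vU: (v \in U); first by constructor 2.
    by constructor 3; rewrite in_setD in_setU vN vU vA.
  have contra : forall u x, u \in U -> x \in A2 -> e u x || e x u -> False.
    move=> u x uU xA2 ux.
    have xA : x \in A by move/subsetP: A2A; apply.
    have xN : x \in N.
      rewrite /N /nbhd inE in_setD xA andbT.
      rewrite (_ : x \in U = false) /=; last by apply/negbTE/negP => xU; exact: UA2 x xU xA2.
      apply/existsP; exists u; rewrite uU /sub_adj !inE /=.
      have uA : u \in A by move/subsetP: UA; apply.
      by rewrite uA xA !andbT.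
    by move: xA2; rewrite in_setD in_setU xN orbT.
  move=> v w vA wA vw; rewrite has_cat; apply/orP.
  have s1ne : forall v w, v \in N -> w \in N ->
      has (fun X : {set V} => (v \in X) && (w \in X)) (map (setU N) s1).
    move=> v' w' vN wN; case: (s1) s1p => // X s _ /=.
    by rewrite !in_setU vN wN.
  case: (cases v vA) => hv; case: (cases w wA) => hw.
  + by left; apply: s1ne.
  + by left; apply: L2 => //; apply: s1e; rewrite ?eqxx.
  + by right; apply: L2 => //; apply: s2e; rewrite ?eqxx.
  + by left; apply: L3 => //; apply: s1e; rewrite ?eqxx.
  + by left; apply: L1; apply: s1e.
  + exfalso; case/orP: vw => [/eqP vw|evw]; first by subst w; exact: UA2 v hv hw.
    by apply: (contra v w hv hw); rewrite evw.
  + by right; apply: L3 => //; apply: s2e; rewrite ?eqxx.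
  + exfalso; case/orP: vw => [/eqP vw|evw]; first by subst w; exact: UA2 v hw hv.
    by apply: (contra w v hw hv); rewrite evw orbT.
  + by right; apply: L1; apply: s2e.
- apply: interp_cat; try exact: interp_map.
  move=> i k j; rewrite !size_map => i1 k1 j1.
  rewrite !(nth_map set0 set0) //.
  have -> : nth set0 (map (setU N) s1 ++ map (setU N) s2) j = N :|: nth set0 (s1 ++ s2) j.
    rewrite !nth_cat size_map; case: ifP => h; rewrite (nth_map set0 set0) //; lia.
  apply/subsetP => v; rewrite in_setI !in_setU.
  case vN: (v \in N) => //= /andP[v1 v2]; exfalso; apply: (UA2 v).
    by move/allP/(_ _ (mem_nth set0 i1))/subsetP: s1A; apply.
  by move/allP/(_ _ (mem_nth set0 k1))/subsetP: s2A; apply.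
- rewrite all_cat !all_map; apply/andP; split; apply/allP => X XS /=.
    apply: (@le_trans _ _ (#|N|%:R + #|X|%:R)).
      by rewrite -natrD ler_nat cardsU leq_subr.
    have := allP s1s X XS => /= hX.
    have hUU : (#|U| + #|U| <= #|A|)%N by move: hU; clear; lia.
    have hm := epsmono epos hUU.
    apply: (@le_trans _ _ (eps * #|U|%:R + (b%:R + eps * #|U|%:R))).
      by rewrite lerD // ltW.
    by rewrite addrCA lerD2l.
  apply: (@le_trans _ _ (#|N|%:R + #|X|%:R)).
    by rewrite -natrD ler_nat cardsU leq_subr.
  have := allP s2s X XS => /= hX.
  have hm := epsmono epos cUA2.
  apply: (@le_trans _ _ (eps * #|U|%:R + (b%:R + eps * #|A2|%:R))).
    by rewrite lerD // ltW.
  by rewrite addrCA lerD2l.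
Qed.




Theorem theorem6 (R : realFieldType) (V : finType) (e : rel V)
  (e_sym : symmetric e) (e_irr : irreflexive e) (eps : R) (eps_pos : (0 < eps)%R)
  (k : int) (hk : is_treewidth e k) :
  (k%:~R <= 2 * (b_eps e eps)%:R + 2 * eps * (#|V|)%:R)%R.
Proof.
set b := b_eps e eps.
have hb : bounded e b.+1 eps by rewrite /b /b_eps; case: ex_minnP.
have [s [sp sA se si ss]] := @decomp R V e eps b eps_pos hb #|V| [set: V] (max_card _).
have [m hm] : exists m, size s = m.+1 by exists (size s).-1; rewrite prednK.
pose X (i : 'I_m.+1) := nth set0 s i.
have TD : tree_decomposition e (@prel m.+1) X.
  split.
  - exact: prel_tree.
  - move=> v; have := se v v (in_setT v) (in_setT v); rewrite eqxx => /(_ isT).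
    case/(has_nthP set0) => i; rewrite hm => il /andP[h _].
    by exists (Ordinal il).
  - move=> v w vw; have := se v w (in_setT v) (in_setT w); rewrite vw orbT => /(_ isT).
    case/(has_nthP set0) => i; rewrite hm => il h.
    by exists (Ordinal il).
  - move=> i j l /otp_between hb'; rewrite /X.
    have := ltn_ord i; have := ltn_ord l.
    case/orP: (leq_total i l) => il io lo.
    + apply: si; rewrite ?hm //; move: hb'; rewrite (minn_idPl il) (maxn_idPr il); lia.
    + rewrite setIC; apply: si; rewrite ?hm //; move: hb'; rewrite (minn_idPr il) (maxn_idPl il); lia.
have := hk.2 _ _ _ TD; rewrite /td_width.
have [i0 ->] := @bigop.eq_bigmax _ (fun i => #|X i|) ltac:(by rewrite card_ord).
have hX : (#|X i0|%:R <= b%:R + eps * #|[set: V]|%:R :> R)%R.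
  by apply: (allP ss); apply: mem_nth; rewrite hm.
rewrite cardsT in hX.
rewrite -(ler_int R) => hk'; apply: (le_trans hk').
rewrite rmorphB /= rmorph1 pmulrn.
have h1 : (0 <= b%:R :> R)%R by exact: ler0n.
have h2 : (0 <= eps * #|V|%:R :> R)%R by apply: mulr_ge0; [exact: ltW | exact: ler0n].
rewrite -mulrA.
set B := (b%:R : R) in h1 hX *; set E := (eps * #|V|%:R)%R in h2 hX *.
set x := (#|X i0|%:R : R) in hX *.
apply: (@le_trans _ _ (B + E)%R); first by rewrite lerBlDr (le_trans hX) // lerDl ler01.
by rewrite mulr_natl mulr_natl !mulr2n lerD // lerDl.
Qed.
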